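(* Let $\Lambda$ be a source-free, finite, primitive, non-empty $k$-graph with shift $\sigma=(\sigma_1,\dots,\sigma_k)$ on its infinite-path space $\Lambda^\infty$. For every $p\in\mathbb{N}^k$ with $p\ge(1,\dots,1)$, the local homeomorphism $\sigma^p:\Lambda^\infty\to\Lambda^\infty$ is positively expansive and exact.
   Context: A $k$-graph is a countable category $\Lambda$ with a functor $d:\Lambda\to\mathbb{N}^k$ (degree) such that for every $\lambda\in\Lambda$ and $m,n\in\mathbb{N}^k$ with $d(\lambda)=m+n$ there are unique $\mu,\nu$ with $d(\mu)=m$, $d(\nu)=n$, $\lambda=\mu\nu$. $\Lambda^n=d^{-1}(n)$; $\Lambda^0$ are the vertices; $v\Lambda^n w=\{\lambda\in\Lambda^n: r(\lambda)=v,\ s(\lambda)=w\}$. $\Lambda$ is finite if each $\Lambda^n$ is finite, source-free if $v\Lambda^n\neq\varnothing$ for all $v,n$, primitive if there is $n\in\mathbb{N}^k\setminus\{0\}$ with $v\Lambda^n w\neq\varnothing$ for all vertices $v,w$. $\Omega_k$ is the $k$-graph with morphisms $\{(m,n)\in\mathbb{N}^k\times\mathbb{N}^k: m\le n\}$, $(l,m)(m,n)=(l,n)$, $d(m,n)=n-m$. $\Lambda^\infty$ is the set of degree-preserving functors $x:\Omega_k\to\Lambda$, with topology generated by cylinder sets $\mathcal{Z}(\lambda)=\{x: x(0,d(\lambda))=\lambda\}$; it is compact Hausdorff. The shift is $\sigma_i(x)(m,n)=x(m+\mathbf{e}_i,n+\mathbf{e}_i)$, so $\sigma^l(x)(m,n)=x(m+l,n+l)$.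 A map $T$ on a compact metric space $(X,d)$ is positively expansive if there is $\epsilon>0$ such that for all distinct $x,y$ there is $n\in\mathbb{N}$ with $d(T^n x,T^n y)\ge\epsilon$; it is exact if for every nonempty open $U$ there is $n$ with $T^n(U)=X$. (A compatible metric on $\Lambda^\infty$ is $\rho_\Lambda(x,y)=2^{-N_{xy}}$, $N_{xy}=\min\{n\in\mathbb{N}: x(nq,(n+1)q)\neq y(nq,(n+1)q)\}$ for a fixed $q\ge(1,\dots,1)$, $\min\varnothing=\infty$.) *)

(* Defs.v *)
From Stdlib Require Fin.
From Stdlib Require Import Reals Lia Arith.
From Stdlib Require Import Classical ClassicalEpsilon FunctionalExtensionality.

Set Implicit Arguments.

Definition vec (k : nat) := Fin.t k -> nat.
Definition vzero {k} : vec k := fun _ => 0.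
Definition vconst {k} (c : nat) : vec k := fun _ => c.
Definition vadd {k} (m n : vec k) : vec k := fun i => m i + n i.
Definition vsub {k} (m n : vec k) : vec k := fun i => m i - n i.
Definition vscale {k} (c : nat) (q : vec k) : vec k := fun i => c * q i.
Definition vle {k} (m n : vec k) : Prop := forall i, m i <= n i.

Lemma vle_zero {k} (n : vec k) : vle vzero n.
Proof. intro i; unfold vzero; lia. Qed.

Lemma vle_add_r {k} (m n l : vec k) : vle m n -> vle (vadd m l) (vadd n l).
Proof. intros H i; unfold vadd; specialize (H i); lia. Qed.

Lemma vle_scale_S {k} (c : nat) (q : vec k) : vle (vscale c q) (vscale (S c) q).
Proof. intro i; unfold vscale; simpl; lia. Qed.

(* A countable category (objects kObj, morphisms kMor with range r and
   source s; composition kcomp mu nu = "mu nu" is meaningful when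
   s mu = r nu) with a degree functor d into N^k having the unique
   factorisation property. *)
Record kgraph (k : nat) := {
  kObj : Type;
  kMor : Type;
  kr : kMor -> kObj;
  ks : kMor -> kObj;
  kid : kObj -> kMor;
  kcomp : kMor -> kMor -> kMor;
  kd : kMor -> vec k;
  kr_id : forall v, kr (kid v) = v;
  ks_id : forall v, ks (kid v) = v;
  kr_comp : forall mu nu, ks mu = kr nu -> kr (kcomp mu nu) = kr mu;
  ks_comp : forall mu nu, ks mu = kr nu -> ks (kcomp mu nu) = ks nu;
  kcomp_id_l : forall l, kcomp (kid (kr l)) l = l;
  kcomp_id_r : forall l, kcomp l (kid (ks l)) = l;
  kcomp_assoc : forall a b c, ks a = kr b -> ks b = kr c ->
      kcomp (kcomp a b) c = kcomp a (kcomp b c);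
  kd_id : forall v, kd (kid v) = vzero;
  kd_comp : forall mu nu, ks mu = kr nu -> kd (kcomp mu nu) = vadd (kd mu) (kd nu);
  kfact : forall l (m n : vec k), kd l = vadd m n ->
      exists mu nu, ks mu = kr nu /\ kd mu = m /\ kd nu = n /\ l = kcomp mu nu /\
        (forall mu' nu', ks mu' = kr nu' -> kd mu' = m -> kd nu' = n ->
           l = kcomp mu' nu' -> mu' = mu /\ nu' = nu);
  kcountable : exists f : kMor -> nat, forall a b, f a = f b -> a = b
}.

Arguments kObj {k}. Arguments kMor {k}. Arguments kr {k}. Arguments ks {k}.
Arguments kid {k}. Arguments kcomp {k}. Arguments kd {k}.

Section KG.
Context {k : nat} (L : kgraph k).

Definition kfinite : Prop :=
  forall n : vec k, exists s : list (kMor L), forall l, kd L l = n -> List.In l s.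

Definition source_free : Prop :=
  forall (v : kObj L) (n : vec k), exists l, kr L l = v /\ kd L l = n.

Definition primitive_kgraph : Prop :=
  exists n : vec k, n <> vzero /\
    forall v w : kObj L, exists l, kd L l = n /\ kr L l = v /\ ks L l = w.

Definition nonempty_kgraph : Prop := exists v : kObj L, True.

(* Degree-preserving functors Omega_k -> Lambda: x m n H is the image of the
   morphism (m,n) of Omega_k (H : m <= n). *)
Definition ompre := forall m n : vec k, vle m n -> kMor L.

Record is_inf_path (x : ompre) : Prop := {
  ip_deg : forall m n H, kd L (x m n H) = vsub n m;
  ip_id : forall m H, exists v, x m m H = kid L v;
  ip_comp : forall l m n H1 H2 H3,
      ks L (x l m H1) = kr L (x m n H2) /\ x l n H3 = kcomp L (x l m H1) (x m n H2)
}.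

Definition infpath := { x : ompre | is_inf_path x }.

Definition shift_fun (l : vec k) (x : ompre) : ompre :=
  fun m n H => x (vadd m l) (vadd n l) (vle_add_r l H).

Lemma shift_inf_path (l : vec k) (x : ompre) : is_inf_path x -> is_inf_path (shift_fun l x).
Proof.
  intros [Hd Hi Hc]; split; unfold shift_fun.
  - intros m n H; rewrite Hd; apply functional_extensionality; intro i;
      unfold vsub, vadd; lia.
  - intros m H; apply Hi.
  - intros a b c H1 H2 H3; apply Hc.
Qed.

Definition shift (l : vec k) (x : infpath) : infpath :=
  exist _ (shift_fun l (proj1_sig x)) (shift_inf_path l (proj2_sig x)).

Definition cyl (l : kMor L) : infpath -> Prop :=
  fun x => proj1_sig x vzero (kd L l) (vle_zero _) = l.

Definition path_diff (q : vec k) (x y : infpath) (n : nat) : Prop :=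
  proj1_sig x (vscale n q) (vscale (S n) q) (vle_scale_S n q) <>
  proj1_sig y (vscale n q) (vscale (S n) q) (vle_scale_S n q).

Definition rho (q : vec k) (x y : infpath) : R :=
  match excluded_middle_informative (exists n, path_diff q x y n) with
  | left _ => (/ 2) ^ (epsilon (inhabits 0%nat)
                         (fun n => path_diff q x y n /\
                                   forall m, path_diff q x y m -> (n <= m)%nat))
  | right _ => 0
  end.

End KG.
Arguments cyl {k} L l x.
Arguments rho {k} L q x y.
Arguments shift {k} L l x.
Arguments infpath {k} L.
Arguments source_free {k} L.
Arguments kfinite {k} L.
Arguments primitive_kgraph {k} L.
Arguments nonempty_kgraph {k} L.

Inductive gen_top {X : Type} (B : (X -> Prop) -> Prop) : (X -> Prop) -> Prop :=
| gt_basic : forall U, B U -> gen_top B U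
| gt_full : gen_top B (fun _ => True)
| gt_inter : forall U V, gen_top B U -> gen_top B V -> gen_top B (fun x => U x /\ V x)
| gt_union : forall (I : Type) (F : I -> X -> Prop),
    (forall i, gen_top B (F i)) -> gen_top B (fun x => exists i, F i x)
| gt_ext : forall U V, (forall x, U x <-> V x) -> gen_top B U -> gen_top B V.

Definition cyl_open {k} (L : kgraph k) : (infpath L -> Prop) -> Prop :=
  gen_top (fun U => exists l, U = cyl L l).

Definition pos_expansive {X : Type} (d : X -> X -> R) (T : X -> X) : Prop :=
  exists eps : R, (0 < eps)%R /\
    forall x y, x <> y -> exists n, (d (Nat.iter n T x) (Nat.iter n T y) >= eps)%R.

Definition exact {X : Type} (isopen : (X -> Prop) -> Prop) (T : X -> X) : Prop :=
  forall U, isopen U -> (exists x, U x) ->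
    exists n, forall y, exists x, U x /\ Nat.iter n T x = y.
Arguments cyl_open {k} L _.

(* Main.v *)
Require Import Defs.
From Stdlib Require Import Reals Lia Arith Lra.
From Stdlib Require Import Classical ClassicalEpsilon FunctionalExtensionality ProofIrrelevance.

Lemma fin_bound : forall n (f : Fin.t n -> nat), exists B, forall i, f i <= B.
Proof.
  induction n as [|n IH]; intros f.
  - exists 0; intro i; exact (Fin.case0 (fun i => f i <= 0) i).
  - destruct (IH (fun i => f (Fin.FS i))) as [B HB].
    exists (Nat.max (f Fin.F1) B); intro i.
    apply (Fin.caseS' i (fun i => f i <= Nat.max (f Fin.F1) B)).
    + lia.
    + intro j; specialize (HB j); simpl in HB; lia.
Qed.

Lemma least_exists (P : nat -> Prop) :
  (exists n, P n) -> exists n, P n /\ forall m, P m -> n <= m.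
Proof.
  intros [n Hn]. revert Hn. pattern n; apply (well_founded_ind lt_wf). clear n.
  intros n IH Hn.
  destruct (classic (exists m, P m /\ m < n)) as [[m [Hm Hlt]]|Hno].
  - exact (IH m Hlt Hm).
  - exists n; split; auto. intros m Hm. destruct (le_lt_dec n m); auto.
    exfalso; apply Hno; eauto.
Qed.

Lemma half_pow_bounds d : (0 < (/2)^d <= 1)%R.
Proof. induction d; simpl; lra. Qed.

Lemma half_pow_anti a b : (a <= b)%nat -> ((/2)^b <= (/2)^a)%R.
Proof.
  intro H. replace b with (a + (b - a))%nat by lia. rewrite pow_add.
  pose proof (half_pow_bounds a); pose proof (half_pow_bounds (b - a)); nra.
Qed.

Section KG2.
Context {k : nat} (L : kgraph k).

Definition vmax (m n : vec k) : vec k := fun i => Nat.max (m i) (n i).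

Lemma vext (m n : vec k) : (forall i, m i = n i) -> m = n.
Proof. intro; apply functional_extensionality; auto. Qed.

Lemma vle_trans (a b c : vec k) : vle a b -> vle b c -> vle a c.
Proof. unfold vle; intros H1 H2 i; specialize (H1 i); specialize (H2 i); lia. Qed.

Lemma vle_refl (a : vec k) : vle a a.
Proof. intro i; lia. Qed.

Lemma vadd_cancel (m u u' : vec k) : vadd m u = vadd m u' -> u = u'.
Proof.
  intro H; apply vext; intro i; apply (f_equal (fun f => f i)) in H;
  unfold vadd in H; lia.
Qed.

Lemma fact_uniq a b a' b' : ks L a = kr L b -> ks L a' = kr L b' ->
  kd L a = kd L a' -> kd L b = kd L b' -> kcomp L a b = kcomp L a' b' -> a = a' /\ b = b'.
Proof.
  intros H1 H2 H3 H4 H5.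
  destruct (kfact L (kcomp L a b) (kd_comp L a b H1)) as [mu [nu [_ [_ [_ [_ U]]]]]].
  destruct (U a b H1 eq_refl eq_refl eq_refl) as [-> ->].
  destruct (U a' b' H2 (eq_sym H3) (eq_sym H4) H5) as [-> ->]. auto.
Qed.

Lemma deg0_id l : kd L l = vzero -> l = kid L (kr L l).
Proof.
  intro H.
  destruct (fact_uniq (kid L (kr L l)) l l (kid L (ks L l))) as [E _].
  - apply ks_id.
  - symmetry; apply kr_id.
  - rewrite kd_id; auto.
  - rewrite kd_id; auto.
  - rewrite kcomp_id_l, kcomp_id_r; reflexivity.
  - auto.
Qed.

Definition Seg (l : kMor L) (m n : vec k) (s : kMor L) : Prop :=
  exists p t, ks L p = kr L s /\ ks L s = kr L t /\ kd L p = m /\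
    vadd m (kd L s) = n /\ l = kcomp L p (kcomp L s t).

Lemma Seg_uniq l m n s s' : Seg l m n s -> Seg l m n s' -> s = s'.
Proof.
  intros (p & t & H1 & H2 & H3 & H4 & H5) (p' & t' & H1' & H2' & H3' & H4' & H5').
  assert (E1 : kd L s = kd L s') by (apply (vadd_cancel m); congruence).
  assert (Hk1 : ks L p = kr L (kcomp L s t)) by (rewrite kr_comp; auto).
  assert (Hk2 : ks L p' = kr L (kcomp L s' t')) by (rewrite kr_comp; auto).
  assert (D1 : kd L l = vadd m (kd L (kcomp L s t)))
    by (rewrite H5, kd_comp, H3; auto).
  assert (D2 : kd L l = vadd m (kd L (kcomp L s' t')))
    by (rewrite H5', kd_comp, H3'; auto).
  assert (E2 : kd L (kcomp L s t) = kd L (kcomp L s' t'))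
    by (apply (vadd_cancel m); congruence).
  destruct (fact_uniq _ _ _ _ Hk1 Hk2 (eq_trans H3 (eq_sym H3')) E2
              (eq_trans (eq_sym H5) H5')) as [_ E3].
  assert (E4 : kd L t = kd L t').
  { rewrite (kd_comp L s t H2), (kd_comp L s' t' H2'), E1 in E2.
    apply (vadd_cancel _ _ _ E2). }
  destruct (fact_uniq _ _ _ _ H2 H2' E1 E4 E3) as [E _]. exact E.
Qed.

Lemma Seg_ext l m n s u : Seg l m n s -> ks L l = kr L u -> Seg (kcomp L l u) m n s.
Proof.
  intros (p & t & H1 & H2 & H3 & H4 & H5) Hu.
  assert (Hst : ks L p = kr L (kcomp L s t)) by (rewrite kr_comp; auto).
  assert (Ht : ks L t = kr L u).
  { rewrite <- Hu, H5, (ks_comp L _ _ Hst), (ks_comp L _ _ H2). reflexivity. }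
  exists p, (kcomp L t u); repeat split; auto.
  - rewrite kr_comp; auto.
  - assert (Hst2 : ks L (kcomp L s t) = kr L u) by (rewrite ks_comp; auto).
    rewrite H5, (kcomp_assoc L _ _ _ Hst Hst2), (kcomp_assoc L _ _ _ H2 Ht).
    reflexivity.
Qed.

Lemma Seg_exists l m n : vle m n -> vle n (kd L l) -> exists s, Seg l m n s.
Proof.
  unfold vle; intros Hmn Hnl.
  destruct (kfact L l (m:=n) (n:=vsub (kd L l) n)) as (a & t & Hat & Ha & Ht & El & _).
  { apply vext; intro i; unfold vadd, vsub; specialize (Hnl i); lia. }
  destruct (kfact L a (m:=m) (n:=vsub n m)) as (p & s & Hps & Hp & Hs & Ea & _).
  { rewrite Ha. apply vext; intro i; unfold vadd, vsub; specialize (Hmn i); lia. }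
  assert (Hst : ks L s = kr L t) by (rewrite <- Hat, Ea, ks_comp; auto).
  exists s, p, t.
  repeat split; auto.
  - rewrite Hs. apply vext; intro i; unfold vadd, vsub; specialize (Hmn i); lia.
  - rewrite El, Ea. apply kcomp_assoc; auto.
Qed.

Lemma Seg_comp l a b c s1 s2 s3 : vle a b -> vle b c ->
  Seg l a b s1 -> Seg l b c s2 -> Seg l a c s3 -> ks L s1 = kr L s2 /\ s3 = kcomp L s1 s2.
Proof.
  unfold vle; intros Hab Hbc S1 S2 (p3 & t3 & H1 & H2 & H3 & H4 & H5).
  destruct (kfact L s3 (m:=vsub b a) (n:=vsub c b)) as (u & v & Huv & Hu & Hv & Es & _).
  { apply vext; intro i; apply (f_equal (fun f => f i)) in H4; unfold vadd, vsub in *;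
    specialize (Hab i); specialize (Hbc i); lia. }
  assert (Hp3u : ks L p3 = kr L u) by (rewrite H1, Es, kr_comp; auto).
  assert (Hvt : ks L v = kr L t3) by (rewrite <- H2, Es, ks_comp; auto).
  assert (Hu_vt : ks L u = kr L (kcomp L v t3)) by (rewrite kr_comp; auto).
  assert (E1 : Seg l a b u).
  { exists p3, (kcomp L v t3); repeat split; auto.
    - rewrite Hu; apply vext; intro i; unfold vadd, vsub in *; specialize (Hab i); lia.
    - rewrite H5, Es, (kcomp_assoc L u v t3 Huv Hvt); auto. }
  assert (E2 : Seg l b c v).
  { exists (kcomp L p3 u), t3; repeat split; auto.
    - rewrite ks_comp; auto.
    - rewrite kd_comp, H3, Hu by auto. apply vext; intro i; unfold vadd, vsub in *;
      specialize (Hab i); lia.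
    - rewrite Hv. apply vext; intro i; unfold vadd, vsub in *; specialize (Hbc i); lia.
    - rewrite H5, Es, (kcomp_assoc L u v t3 Huv Hvt),
        (kcomp_assoc L p3 u (kcomp L v t3) Hp3u Hu_vt). reflexivity. }
  rewrite (Seg_uniq _ _ _ _ _ S1 E1), (Seg_uniq _ _ _ _ _ S2 E2). auto.
Qed.


Definition T (x : infpath L) (m n : vec k) : kMor L :=
  epsilon (inhabits (proj1_sig x vzero vzero (vle_zero vzero)))
          (fun s => exists H, proj1_sig x m n H = s).

Lemma T_eq x m n H : T x m n = proj1_sig x m n H.
Proof.
  unfold T.
  destruct (epsilon_spec (inhabits (proj1_sig x vzero vzero (vle_zero vzero)))
     (fun s => exists H, proj1_sig x m n H = s)
     (ex_intro _ (proj1_sig x m n H) (ex_intro _ H eq_refl))) as [H' E].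
  rewrite <- E. f_equal. apply proof_irrelevance.
Qed.

Lemma T_deg x m n : vle m n -> kd L (T x m n) = vsub n m.
Proof. intro H; rewrite (T_eq x m n H); apply (ip_deg (proj2_sig x)). Qed.

Lemma T_comp x a b c : vle a b -> vle b c ->
  ks L (T x a b) = kr L (T x b c) /\ T x a c = kcomp L (T x a b) (T x b c).
Proof.
  intros Hab Hbc.
  rewrite (T_eq x a b Hab), (T_eq x b c Hbc), (T_eq x a c (vle_trans _ _ _ Hab Hbc)).
  apply (ip_comp (proj2_sig x)).
Qed.

Lemma T_seg x a m n c : vle a m -> vle m n -> vle n c ->
  Seg (T x a c) (vsub m a) (vsub n a) (T x m n).
Proof.
  intros Ham Hmn Hnc.
  destruct (T_comp x a m c Ham (vle_trans _ _ _ Hmn Hnc)) as [K1 E1].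
  destruct (T_comp x m n c Hmn Hnc) as [K2 E2].
  exists (T x a m), (T x n c); repeat split; auto.
  - rewrite K1, E2, kr_comp; auto.
  - apply T_deg; auto.
  - rewrite T_deg by auto. apply vext; intro i; unfold vadd, vsub;
    specialize (Ham i); specialize (Hmn i); lia.
  - rewrite E1, E2; reflexivity.
Qed.

Lemma T_sub x y a c m n : T x a c = T y a c -> vle a m -> vle m n -> vle n c ->
  T x m n = T y m n.
Proof.
  intros E H1 H2 H3.
  apply (Seg_uniq (T x a c) (vsub m a) (vsub n a)).
  - apply T_seg; auto.
  - rewrite E; apply T_seg; auto.
Qed.

Lemma T_iter (p : vec k) j : forall x m n, vle m n ->
  T (Nat.iter j (shift L p) x) m n = T x (vadd m (vscale j p)) (vadd n (vscale j p)).
Proof.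
  induction j as [|j IH]; intros x m n H.
  - simpl. f_equal; apply vext; intro i; unfold vadd, vscale; lia.
  - change (Nat.iter (S j) (shift L p) x) with (shift L p (Nat.iter j (shift L p) x)).
    rewrite (T_eq _ m n H).
    unfold shift at 1; cbn [proj1_sig]; unfold shift_fun.
    rewrite <- T_eq. rewrite IH by (apply vle_add_r; auto).
    f_equal; apply vext; intro i; unfold vadd, vscale; simpl; lia.
Qed.

Lemma eq_infpath (a b : infpath L) :
  (forall m n, vle m n -> T a m n = T b m n) -> a = b.
Proof.
  intro Hall. destruct a as [fa pa], b as [fb pb].
  assert (E : fa = fb).
  { apply functional_extensionality_dep; intro m.
    apply functional_extensionality_dep; intro n.
    apply functional_extensionality; intro H.
    specialize (Hall m n H). rewrite !(T_eq _ m n H) in Hall. exact Hall. }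
  subst fb. f_equal. apply proof_irrelevance.
Qed.

Lemma T_kr x N : kr L (T x vzero N) = kr L (T x vzero vzero).
Proof.
  destruct (T_comp x vzero vzero N (vle_refl _) (vle_zero _)) as [K E].
  rewrite E at 1. rewrite kr_comp; auto.
Qed.

Section Concat.
Variable lam : kMor L.
Variable y : infpath L.
Hypothesis Hc : ks L lam = kr L (T y vzero vzero).

Lemma Hc' N : ks L lam = kr L (T y vzero N).
Proof. rewrite T_kr; auto. Qed.

Definition W N := kcomp L lam (T y vzero N).

Lemma W_deg N : kd L (W N) = vadd (kd L lam) N.
Proof.
  unfold W; rewrite kd_comp by apply Hc'. rewrite T_deg by apply vle_zero.
  apply vext; intro i; unfold vadd, vsub, vzero; lia.
Qed.

Lemma W_ext N N' : vle N N' -> ks L (W N) = kr L (T y N N') /\ W N' = kcomp L (W N) (T y N N').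
Proof.
  intro H. destruct (T_comp y vzero N N' (vle_zero _) H) as [K E].
  unfold W. split.
  - rewrite ks_comp by apply Hc'. auto.
  - rewrite E, kcomp_assoc; auto. apply Hc'.
Qed.

Definition Z m n := epsilon (inhabits lam) (fun s => Seg (W n) m n s).

Lemma Z_spec m n N : vle m n -> vle n N -> Seg (W N) m n (Z m n).
Proof.
  intros H1 H2.
  assert (S : Seg (W n) m n (Z m n)).
  { unfold Z; apply epsilon_spec. apply Seg_exists; auto.
    rewrite W_deg. intro i; unfold vadd; lia. }
  destruct (W_ext n N H2) as [K E]. rewrite E. apply Seg_ext; auto.
Qed.

Lemma Z_char m n N s : vle m n -> vle n N -> Seg (W N) m n s -> Z m n = s.
Proof. intros; eapply Seg_uniq; [apply Z_spec|]; eauto. Qed.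

Definition zf : ompre L := fun m n _ => Z m n.

Lemma Seg_deg l m n s : Seg l m n s -> vadd m (kd L s) = n.
Proof. intros (p & t & _ & _ & _ & H & _); auto. Qed.

Lemma zf_path : is_inf_path zf.
Proof.
  split; unfold zf.
  - intros m n H. pose proof (Seg_deg _ _ _ _ (Z_spec m n n H (vle_refl _))) as D.
    apply vext; intro i; apply (f_equal (fun f => f i)) in D; unfold vadd, vsub in *; lia.
  - intros m H. exists (kr L (Z m m)). apply deg0_id.
    pose proof (Seg_deg _ _ _ _ (Z_spec m m m H (vle_refl _))) as D.
    apply vext; intro i; apply (f_equal (fun f => f i)) in D; unfold vadd, vzero in *; lia.
  - intros a b c H1 H2 H3.
    apply (Seg_comp (W c) a b c); auto; apply Z_spec; auto using vle_refl.
Qed.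

Definition zp : infpath L := exist _ zf zf_path.

Lemma T_zp m n : vle m n -> T zp m n = Z m n.
Proof. intro H; rewrite (T_eq _ m n H); reflexivity. Qed.

Lemma concat_prefix : T zp vzero (kd L lam) = lam.
Proof.
  rewrite T_zp by apply vle_zero.
  apply (Z_char _ _ (kd L lam)); auto using vle_zero, vle_refl.
  exists (kid L (kr L lam)), (T y vzero (kd L lam)); repeat split.
  - apply ks_id.
  - apply Hc'.
  - apply kd_id.
  - unfold W. rewrite <- (kr_comp L lam (T y vzero (kd L lam)) (Hc' _)), kcomp_id_l.
    reflexivity.
Qed.

Lemma concat_shift m n : vle m n ->
  T zp (vadd m (kd L lam)) (vadd n (kd L lam)) = T y m n.
Proof.
  intro H.
  assert (H' : vle (vadd m (kd L lam)) (vadd n (kd L lam))) by (apply vle_add_r; auto).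
  rewrite T_zp by auto.
  apply (Z_char _ _ (vadd n (kd L lam))); auto using vle_refl.
  assert (Hn : vle n (vadd n (kd L lam))) by (intro i; unfold vadd; lia).
  destruct (W_ext n _ Hn) as [K E]. rewrite E. apply Seg_ext; auto.
  destruct (T_comp y vzero m n (vle_zero _) H) as [K2 E2].
  assert (Hp : ks L lam = kr L (T y vzero m)) by apply Hc'.
  exists (kcomp L lam (T y vzero m)), (kid L (ks L (T y m n))); repeat split.
  - rewrite ks_comp; auto.
  - rewrite kr_id; auto.
  - rewrite kd_comp, T_deg by auto using vle_zero.
    apply vext; intro i; unfold vadd, vsub, vzero; lia.
  - rewrite T_deg by auto. apply vext; intro i; unfold vadd, vsub; specialize (H i); lia.
  - rewrite kcomp_id_r. unfold W. rewrite E2, kcomp_assoc; auto.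
Qed.

End Concat.

Lemma concat (lam : kMor L) (y : infpath L) : ks L lam = kr L (T y vzero vzero) ->
  exists z : infpath L, T z vzero (kd L lam) = lam /\
    forall m n, vle m n -> T z (vadd m (kd L lam)) (vadd n (kd L lam)) = T y m n.
Proof.
  intro Hc. exists (zp lam y Hc). split.
  - apply concat_prefix.
  - apply concat_shift.
Qed.


Lemma open_nbhd U : cyl_open L U -> forall x, U x ->
  exists N, forall z, T z vzero N = T x vzero N -> U z.
Proof.
  unfold cyl_open. induction 1.
  - destruct H as [l ->]. intros x Hx. exists (kd L l). intros z Hz.
    unfold cyl in *. rewrite <- T_eq in *. rewrite Hz; exact Hx.
  - intros x _. exists vzero; auto.
  - intros x [Hu Hv]. destruct (IHgen_top1 x Hu) as [N1 H1].
    destruct (IHgen_top2 x Hv) as [N2 H2].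
    exists (vmax N1 N2). intros z Hz; split.
    + apply H1. apply (T_sub z x vzero (vmax N1 N2)); auto using vle_zero, vle_refl.
      intro i; unfold vmax; lia.
    + apply H2. apply (T_sub z x vzero (vmax N1 N2)); auto using vle_zero, vle_refl.
      intro i; unfold vmax; lia.
  - intros x [i Hi]. destruct (H0 i x Hi) as [N HN]. exists N; intros z Hz; exists i; auto.
  - intros x Hx. apply H in Hx. destruct (IHgen_top x Hx) as [N HN].
    exists N; intros z Hz; apply H; auto.
Qed.

Lemma rho_ge q X Y j : path_diff q X Y j -> ((/2)^j <= rho L q X Y)%R.
Proof.
  intro Hd. unfold rho.
  destruct (excluded_middle_informative _) as [Hex|Hno]; [|exfalso; eauto].
  match goal with |- context [epsilon ?i ?P] =>
    pose proof (epsilon_spec i P (least_exists _ Hex)) as [_ Hm] end.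
  apply half_pow_anti. apply Hm; auto.
Qed.

Lemma expansive_part p q : vle (vconst 1) p -> vle (vconst 1) q ->
  pos_expansive (rho L q) (shift L p).
Proof.
  unfold vle, vconst; intros Hp Hq.
  destruct (fin_bound _ p) as [Mp HM]. set (M := S Mp).
  exists ((/2)^M)%R. split; [apply half_pow_bounds|].
  intros x y Hxy.
  assert (A : exists n, T x (vscale n p) (vadd (vscale n p) (vscale M q)) <>
                        T y (vscale n p) (vadd (vscale n p) (vscale M q))).
  { apply NNPP; intro Hno. apply Hxy.
    assert (Hall : forall n, T x (vscale n p) (vadd (vscale n p) (vscale M q)) =
                             T y (vscale n p) (vadd (vscale n p) (vscale M q))).
    { intro n; apply NNPP; intro Hne; apply Hno; exists n; auto. }
    assert (Z0 : vscale 0 p = vzero) by (apply vext; intro; reflexivity).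
    assert (Hpre : forall n, T x vzero (vscale n p) = T y vzero (vscale n p)).
    { induction n.
      - rewrite Z0. specialize (Hall 0). rewrite Z0 in Hall.
        apply (T_sub x y vzero (vadd vzero (vscale M q))); auto using vle_zero, vle_refl.
      - destruct (T_comp x vzero (vscale n p) (vscale (S n) p)) as [_ E1];
          [apply vle_zero | apply vle_scale_S |].
        destruct (T_comp y vzero (vscale n p) (vscale (S n) p)) as [_ E2];
          [apply vle_zero | apply vle_scale_S |].
        rewrite E1, E2, IHn. f_equal.
        apply (T_sub x y (vscale n p) (vadd (vscale n p) (vscale M q))); auto using vle_refl.
        + apply vle_scale_S.
        + intro i; unfold vscale, vadd; specialize (HM i); specialize (Hq i).
          unfold M; simpl; nia. }
    apply eq_infpath. intros m n Hmn. destruct (fin_bound _ n) as [B HB].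
    apply (T_sub x y vzero (vscale B p)); auto using vle_zero, vle_refl.
    intro i; unfold vscale; specialize (HB i); specialize (Hp i); nia. }
  destruct A as [n Hn].
  set (X := Nat.iter n (shift L p) x). set (Y := Nat.iter n (shift L p) y).
  assert (HX : T X vzero (vscale M q) = T x (vscale n p) (vadd (vscale n p) (vscale M q))).
  { unfold X; rewrite T_iter by (apply vle_zero).
    f_equal; apply vext; intro i; unfold vadd, vzero; lia. }
  assert (HY : T Y vzero (vscale M q) = T y (vscale n p) (vadd (vscale n p) (vscale M q))).
  { unfold Y; rewrite T_iter by (apply vle_zero).
    f_equal; apply vext; intro i; unfold vadd, vzero; lia. }
  assert (B : exists j, j < M /\ T X (vscale j q) (vscale (S j) q) <> T Y (vscale j q) (vscale (S j) q)).
  { apply NNPP; intro Hno. apply Hn. rewrite <- HX, <- HY.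
    assert (Hall : forall j, j < M -> T X (vscale j q) (vscale (S j) q) = T Y (vscale j q) (vscale (S j) q)).
    { intros j Hj; apply NNPP; intro Hne; apply Hno; exists j; auto. }
    assert (Hq0 : vscale 0 q = vzero) by (apply vext; intro; reflexivity).
    assert (G : forall j, S j <= M -> T X vzero (vscale (S j) q) = T Y vzero (vscale (S j) q)).
    { induction j; intro Hj.
      - rewrite <- Hq0. apply Hall; lia.
      - destruct (T_comp X vzero (vscale (S j) q) (vscale (S (S j)) q)) as [_ E1];
          [apply vle_zero | apply vle_scale_S |].
        destruct (T_comp Y vzero (vscale (S j) q) (vscale (S (S j)) q)) as [_ E2];
          [apply vle_zero | apply vle_scale_S |].
        rewrite E1, E2, IHj by lia. f_equal. apply Hall; lia. }
    apply G; unfold M; lia. }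
  destruct B as [j [Hj Hd]].
  exists n. fold X Y. apply Rle_ge.
  apply Rle_trans with ((/2)^j)%R.
  - apply half_pow_anti; lia.
  - apply rho_ge. unfold path_diff. rewrite <- !T_eq. exact Hd.
Qed.

Lemma exact_part p : vle (vconst 1) p -> source_free L -> primitive_kgraph L ->
  exact (cyl_open L) (shift L p).
Proof.
  intros Hp Hsf Hprim U HU [x Hx].
  destruct (open_nbhd U HU x Hx) as [N HN].
  destruct Hprim as [n0 [_ Hpr]].
  destruct (fin_bound _ (vadd N n0)) as [B HB].
  exists B. intro y.
  set (mu := T x vzero N).
  assert (Hmu : kd L mu = N).
  { unfold mu; rewrite T_deg by apply vle_zero. apply vext; intro i; unfold vsub, vzero; lia. }
  set (D := vscale B p).
  destruct (Hsf (ks L mu) (vsub (vsub D N) n0)) as [al [Hal1 Hal2]].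
  destruct (Hpr (ks L al) (kr L (T y vzero vzero))) as [be [Hb1 [Hb2 Hb3]]].
  assert (Hab : ks L al = kr L be) by auto.
  assert (Hmab : ks L mu = kr L (kcomp L al be)) by (rewrite kr_comp; auto).
  set (lam := kcomp L mu (kcomp L al be)).
  assert (Hle : forall i, N i + n0 i <= D i).
  { intro i; unfold D, vscale; specialize (HB i); specialize (Hp i); unfold vadd, vconst in *; nia. }
  assert (Hdab : kd L (kcomp L al be) = vsub D N).
  { rewrite kd_comp, Hal2, Hb1 by auto. apply vext; intro i; specialize (Hle i);
    unfold vadd, vsub; lia. }
  assert (Hlam : kd L lam = D).
  { unfold lam; rewrite kd_comp, Hdab, Hmu by auto. apply vext; intro i; specialize (Hle i);
    unfold vadd, vsub; lia. }
  assert (Hc : ks L lam = kr L (T y vzero vzero)).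
  { unfold lam; rewrite ks_comp, ks_comp by auto. auto. }
  destruct (concat lam y Hc) as [z [Hz1 Hz2]].
  rewrite Hlam in Hz1, Hz2.
  assert (HND : vle N D) by (intro i; specialize (Hle i); lia).
  exists z. split.
  - apply HN.
    destruct (T_comp z vzero N D (vle_zero _) HND) as [K E].
    rewrite Hz1 in E. unfold lam in E.
    destruct (fact_uniq (T z vzero N) (T z N D) mu (kcomp L al be) K Hmab) as [E' _].
    + rewrite T_deg by apply vle_zero. rewrite Hmu. apply vext; intro i; unfold vsub, vzero; lia.
    + rewrite T_deg, Hdab by auto. reflexivity.
    + auto.
    + exact E'.
  - apply eq_infpath. intros m n Hmn. rewrite T_iter by auto. apply Hz2; auto.
Qed.

End KG2.

Theorem lemma6p6 (k : nat) (L : kgraph k)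
  (Hsf : source_free L) (Hfin : kfinite L) (Hprim : primitive_kgraph L)
  (Hne : nonempty_kgraph L)
  (p : vec k) (Hp : vle (vconst 1) p) :
  (forall q : vec k, vle (vconst 1) q -> pos_expansive (rho L q) (shift L p)) /\
  exact (cyl_open L) (shift L p).
Proof.
  split.
  - intros q Hq; apply expansive_part; auto.
  - apply exact_part; auto.
Qed.
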